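(* Suppose there exist two orthogonal designs of order $n$ and type $(s_1,\ldots,s_u)$ (in the same variables) that are unbiased with parameter $\alpha$. Then for any nonempty subset $S\subseteq\{1,\ldots,u\}$ there exist two weighing matrices that are quasi-unbiased for the parameters $\left(n,\sum_{i\in S}s_i,\alpha,(\sum_{i\in S}s_i)^2/\alpha\right)$.
   Context: A weighing matrix of order $n$ and weight $k$ is an $n\times n$ $(0,1,-1)$-matrix $W$ with $WW^\top=kI_n$. An orthogonal design of order $n$ and type $(s_1,\ldots,s_u)$ in distinct commuting real indeterminates $x_1,\ldots,x_u$ is an $n\times n$ matrix $D$ with entries in $\{0,\pm x_1,\ldots,\pm x_u\}$ such that $DD^\top=(s_1x_1^2+\cdots+s_ux_u^2)I_n$. Two such designs $D_1,D_2$ are unbiased with parameter $\alpha$ if $\alpha>0$ and there is a $(0,1,-1)$-matrix $W$ with $D_1D_2^\top=\frac{s_1x_1^2+\cdots+s_ux_u^2}{\sqrt\alpha}W$. Weighing matrices $W_1,W_2$ of order $n$ and weight $k$ are quasi-unbiased for parameters $(n,k,l,a)$ if $\frac1{\sqrt a}W_1W_2^\top$ is a weighing matrix of order $n$ and weight $l$. *)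

(* Defs.v *)
From HB Require Import structures.
From mathcomp Require Import all_boot all_order all_algebra.
From mathcomp Require Import mpoly.
Set Implicit Arguments. Unset Strict Implicit. Unset Printing Implicit Defensive.
Import Order.TTheory GRing.Theory Num.Theory.
Local Open Scope ring_scope.

Definition pm1_matrix (R : numFieldType) (n : nat) (W : 'M[R]_n) : Prop :=
  forall i j, W i j \in [:: 0; 1; -1].

Definition is_weighing (R : numFieldType) (n : nat) (k : R) (W : 'M[R]_n) : Prop :=
  pm1_matrix W /\ W *m W^T = k%:M.

Definition quasi_unbiased (R : rcfType) (n : nat) (k l a : R)
  (W1 W2 : 'M[R]_n) : Prop :=
  is_weighing k W1 /\ is_weighing k W2 /\
  is_weighing l ((Num.sqrt a)^-1 *: (W1 *m W2^T)).

Definition od_entry (R : rcfType) (u : nat) (e : {mpoly R[u]}) : bool :=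
  (e == 0) || [exists i : 'I_u, (e == 'X_i) || (e == - 'X_i)].

Definition od_form (R : rcfType) (u : nat) (s : 'I_u -> nat) : {mpoly R[u]} :=
  \sum_(i < u) (s i)%:R *: ('X_i ^+ 2).

Definition is_orth_design (R : rcfType) (n u : nat) (s : 'I_u -> nat)
  (D : 'M[{mpoly R[u]}]_n) : Prop :=
  (forall i j, od_entry (D i j)) /\ D *m D^T = (od_form R s)%:M.

Definition unbiased_od (R : rcfType) (n u : nat) (s : 'I_u -> nat) (alpha : R)
  (D1 D2 : 'M[{mpoly R[u]}]_n) : Prop :=
  0 < alpha /\
  exists W : 'M[R]_n, pm1_matrix W /\
    D1 *m D2^T = \matrix_(i, j) (od_form R s * ((Num.sqrt alpha)^-1 * W i j)%:MP).

(* Main.v *)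
Require Import Defs.
From HB Require Import structures.
From mathcomp Require Import all_boot all_order all_algebra.
From mathcomp Require Import mpoly.
Import Order.TTheory GRing.Theory Num.Theory.
Local Open Scope ring_scope.

Theorem proposition3p3 (R : rcfType) (n u : nat) (s : 'I_u -> nat)
  (s_pos : forall i, (0 < s i)%N) (alpha : R)
  (D1 D2 : 'M[{mpoly R[u]}]_n) :
  is_orth_design s D1 -> is_orth_design s D2 -> unbiased_od s alpha D1 D2 ->
  forall S : {set 'I_u}, S != set0 ->
  exists W1 W2 : 'M[R]_n,
    quasi_unbiased ((\sum_(i in S) s i)%N%:R) alpha
      ((\sum_(i in S) s i)%N%:R ^+ 2 / alpha) W1 W2.
Proof.
move=> [E1 O1] [E2 O2] [apos [W [WE U]]] S SN.
pose v : 'I_u -> R := fun i => (i \in S)%:R.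
set k : R := ((\sum_(i in S) s i)%N)%:R.
have kpos : 0 < k.
  case/set0Pn: SN => j jS.
  rewrite ltr0n (bigD1 j) //=; exact: ltn_addr.
have kn0 : k != 0 by rewrite gt_eqF.
have Ef : meval v (od_form R s) = k.
  rewrite /od_form raddf_sum /k natr_sum [RHS]big_mkcond /=.
  match goal with |- ?g => idtac g end.
  apply: eq_bigr => i _.
rewrite mevalZ rmorphXn /= mevalXU /v.
  by case: (i \in S); rewrite ?expr1n ?mulr1 ?expr0n ?mulr0.
have entry (D : 'M[{mpoly R[u]}]_n) : (forall i j, od_entry (D i j)) ->
    pm1_matrix (map_mx (meval v) D).
  move=> E i j; rewrite mxE; have := E i j; rewrite /od_entry.
  case/orP => [/eqP-> | /existsP [l /orP [] /eqP->]].
  - by rewrite meval0 !inE eqxx.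
  - by rewrite mevalXU /v; case: (l \in S); rewrite !inE eqxx ?orbT.
  - by rewrite mevalN mevalXU /v; case: (l \in S); rewrite !inE ?oppr0 eqxx ?orbT.
have wt (D : 'M[{mpoly R[u]}]_n) : D *m D^T = (od_form R s)%:M ->
    map_mx (meval v) D *m (map_mx (meval v) D)^T = k%:M.
  move=> O; rewrite map_trmx -map_mxM O map_scalar_mx.
  match goal with |- ?g => idtac g end.
  by congr (_%:M); exact: Ef.
set A1 := map_mx (meval v) D1; set A2 := map_mx (meval v) D2.
have H12 : A1 *m A2^T = (k / Num.sqrt alpha) *: W.
  rewrite /A1 /A2 map_trmx -map_mxM U; apply/matrixP => i j.
  rewrite !mxE rmorphM /=.
  match goal with |- ?g => idtac g end.
  by rewrite Ef mevalC mulrA.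
have sqa : 0 < Num.sqrt alpha by rewrite sqrtr_gt0.
have sqn : Num.sqrt alpha != 0 by rewrite gt_eqF.
have Hs : Num.sqrt (k ^+ 2 / alpha) = k / Num.sqrt alpha.
  rewrite sqrtrM ?sqr_ge0 // sqrtr_sqr ger0_norm ?ltW //.
  by rewrite sqrtrV ?ltW.
exists A1; exists A2; split.
  by split; [apply: entry | apply: wt].
split.
  by split; [apply: entry | apply: wt].
rewrite H12 Hs scalerA mulVf ?scale1r; last by rewrite mulf_neq0 ?invr_eq0.
split => //.
have T2 : A2^T *m A2 = k%:M.
  have h : A2 *m (k^-1 *: A2^T) = 1%:M.
    by rewrite -scalemxAr wt // scale_scalar_mx mulVf.
  have := mulmx1C h; rewrite -scalemxAl => h2.
  by rewrite -[A2^T *m A2]scale1r -(mulfV kn0) -scalerA h2 scale_scalar_mx mulr1.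
have : (A1 *m A2^T) *m (A1 *m A2^T)^T = (k ^+ 2)%:M.
  rewrite trmx_mul trmxK mulmxA -(mulmxA A1) T2 mul_mx_scalar -scalemxAl wt //.
  by rewrite scale_scalar_mx expr2.
rewrite H12 linearZ /= -scalemxAl -scalemxAr scalerA => h.
have c0 : k / Num.sqrt alpha * (k / Num.sqrt alpha) != 0
  by rewrite !mulf_neq0 ?invr_eq0.
rewrite -[W *m W^T]scale1r -(mulVf c0) -scalerA h scale_scalar_mx.
congr (_%:M).
by rewrite -expr2 expr_div_n sqr_sqrtr ?ltW // invf_div divfK // expf_neq0.
Qed.
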